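(* Let $\Lambda=\operatorname{diag}(\lambda_1,\dots,\lambda_n)$, $\bar\mu\in\mathbb{R}^n$, let $\mathcal{C}$ be a constant positive definite $n\times n$ matrix, and take $a(x)=\Lambda(\bar\mu-x)$ on $\mathcal{U}=\mathbb{R}^n$ (multivariate Ornstein–Uhlenbeck model), with $\kappa\neq-1$ a real constant. Then there is $T_0>0$ such that for $T\le T_0$ the Hamilton–Jacobi equation $$\partial_tS^0+\tfrac{\kappa+1}{2}(\nabla S^0)^T\mathcal{C}\nabla S^0+(\kappa+1)a^T\nabla S^0+\tfrac{\kappa}{2}a^T\mathcal{C}^{-1}a=0,\qquad S^0(T,\cdot)=0,$$ has a solution $S^0(t,x)$ that is a quadratic polynomial in $x$ with $t$-dependent coefficients, and setting $S^1(t)=\frac12\int_t^T\operatorname{tr}\big(\mathcal{C}\nabla^2S^0(s,\cdot)\big)ds$ (which is independent of $x$), the function $S=S^0+S^1$ solves exactly $$\partial_tS+(\kappa+1)a^T\nabla S+\tfrac{\kappa+1}{2}(\nabla S)^T\mathcal{C}\nabla S+\tfrac{\kappa}{2}a^T\mathcal{C}^{-1}a+\tfrac12\operatorname{tr}(\mathcal{C}\nabla^2S)=0,\qquad S(T,\cdot)=0.$$ Consequently all higher WKB corrections $S^j$, $j\ge2$, vanish and the optimal control is $\varphi^*=\frac{1}{A_U(w)}\big(\mathcal{C}^{-1}\Lambda(\bar\mu-x)+\nabla S^0(t,x)\big)$.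
   Context: $\Gamma=e^{S}$ is the function in the representation $J(t,x,w)=\Gamma(t,x)U(w)$ of the value function; $A_U(w)=-U''(w)/U'(w)$; $\nabla,\nabla^2$ are gradient and Hessian in $x$. *)

(* Defs.v *)
(* classical reals. Vectors of R^n are functions nat -> R
   (only indices < n matter); n x n matrices are nat -> nat -> R. *)
From Stdlib Require Import Reals Lra Lia ClassicalEpsilon.
Open Scope R_scope.

Definition vec := nat -> R.
Definition mat := nat -> nat -> R.

Fixpoint fsum (n : nat) (f : nat -> R) : R :=
  match n with O => 0 | S k => fsum k f + f k end.

Definition dot (n : nat) (u v : vec) : R := fsum n (fun i => u i * v i).
Definition bilin (n : nat) (M : mat) (u v : vec) : R :=
  fsum n (fun i => fsum n (fun j => u i * M i j * v j)).
Definition trmul (n : nat) (A B : mat) : R :=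
  fsum n (fun i => fsum n (fun j => A i j * B j i)).

Definition symmetric (n : nat) (C : mat) : Prop :=
  forall i j, (i < n)%nat -> (j < n)%nat -> C i j = C j i.
Definition posdef (n : nat) (C : mat) : Prop :=
  symmetric n C /\
  forall v : vec, (exists i, (i < n)%nat /\ v i <> 0) -> bilin n C v v > 0.
Definition is_inverse (n : nat) (C Cinv : mat) : Prop :=
  forall i j, (i < n)%nat -> (j < n)%nat ->
    fsum n (fun k => C i k * Cinv k j) = (if Nat.eqb i j then 1 else 0) /\
    fsum n (fun k => Cinv i k * C k j) = (if Nat.eqb i j then 1 else 0).

Definition has_deriv (g : R -> R) (x : R) : Prop := exists l, derivable_pt_lim g x l.
Definition deriv (g : R -> R) (x : R) : R :=
  epsilon (inhabits 0) (fun l => derivable_pt_lim g x l).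

Definition upd (x : vec) (i : nat) (h : R) : vec :=
  fun j => if Nat.eqb j i then h else x j.

Definition dtime (S : R -> vec -> R) (t : R) (x : vec) : R :=
  deriv (fun s => S s x) t.
Definition grad (S : R -> vec -> R) (t : R) (x : vec) : vec :=
  fun i => deriv (fun h => S t (upd x i h)) (x i).
Definition hess (S : R -> vec -> R) (t : R) (x : vec) : mat :=
  fun i j => deriv (fun h => grad S t (upd x j h) i) (x j).

Definition regular (n : nat) (T : R) (S : R -> vec -> R) : Prop :=
  forall t x, 0 <= t <= T ->
    has_deriv (fun s => S s x) t /\
    forall i j, (i < n)%nat -> (j < n)%nat ->
      has_deriv (fun h => S t (upd x i h)) (x i) /\
      has_deriv (fun h => grad S t (upd x j h) i) (x j).

Definition quadratic_in_x (n : nat) (S : R -> vec -> R) : Prop :=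
  exists (A : R -> mat) (b : R -> vec) (c : R -> R),
    forall t x, S t x = bilin n (A t) x x + dot n (b t) x + c t.

(* drift a(x) = Lambda (mubar - x), Lambda = diag(lam) *)
Definition drift (lam mu : vec) (x : vec) : vec := fun i => lam i * (mu i - x i).

Definition HJ0 (n : nat) (C Cinv : mat) (lam mu : vec) (kappa T : R)
    (S : R -> vec -> R) : Prop :=
  regular n T S /\ (forall x, S T x = 0) /\
  forall t x, 0 <= t <= T ->
    dtime S t x + (kappa + 1) / 2 * bilin n C (grad S t x) (grad S t x)
    + (kappa + 1) * dot n (drift lam mu x) (grad S t x)
    + kappa / 2 * bilin n Cinv (drift lam mu x) (drift lam mu x) = 0.

Definition HJfull (n : nat) (C Cinv : mat) (lam mu : vec) (kappa T : R)
    (S : R -> vec -> R) : Prop :=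
  regular n T S /\ (forall x, S T x = 0) /\
  forall t x, 0 <= t <= T ->
    dtime S t x + (kappa + 1) * dot n (drift lam mu x) (grad S t x)
    + (kappa + 1) / 2 * bilin n C (grad S t x) (grad S t x)
    + kappa / 2 * bilin n Cinv (drift lam mu x) (drift lam mu x)
    + / 2 * trmul n C (hess S t x) = 0.

Definition zero_vec : vec := fun _ => 0.

(* Main.v *)
Require Import Defs.
From Stdlib Require Import Reals Lra Lia Setoid Morphisms FunctionalExtensionality.
From Coquelicot Require Import Coquelicot.
Open Scope R_scope.


Lemma fsum_ext n f g : (forall i, (i < n)%nat -> f i = g i) -> fsum n f = fsum n g.
Proof. induction n; simpl; intros H; auto. rewrite IHn by (intros; apply H; lia). rewrite H by lia. auto. Qed.

#[export] Instance fsum_proper n : Proper (pointwise_relation nat eq ==> eq) (fsum n).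
Proof. intros f g H. apply fsum_ext. intros; apply H. Qed.

Lemma fsum_plus n f g : fsum n (fun i => f i + g i) = fsum n f + fsum n g.
Proof. induction n; simpl; [lra|rewrite IHn; lra]. Qed.
Lemma fsum_scal_l n c f : fsum n (fun i => c * f i) = c * fsum n f.
Proof. induction n; simpl; [lra|rewrite IHn; lra]. Qed.
Lemma fsum_scal_r n c f : fsum n (fun i => f i * c) = fsum n f * c.
Proof. induction n; simpl; [lra|rewrite IHn; lra]. Qed.
Lemma fsum_opp n f : fsum n (fun i => - f i) = - fsum n f.
Proof. induction n; simpl; [lra|rewrite IHn; lra]. Qed.
Lemma fsum_zero n : fsum n (fun _ => 0) = 0.
Proof. induction n; simpl; [lra|rewrite IHn; lra]. Qed.
Lemma fsum_swap n m (f : nat -> nat -> R) :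
  fsum n (fun i => fsum m (fun j => f i j)) = fsum m (fun j => fsum n (fun i => f i j)).
Proof.
  induction n; simpl. { symmetry; apply fsum_zero. }
  rewrite IHn. rewrite <- fsum_plus. reflexivity.
Qed.
Lemma fsum_delta n i f : (i < n)%nat -> fsum n (fun j => if Nat.eqb j i then f j else 0) = f i.
Proof.
  induction n; intros H; [lia|]. simpl.
  destruct (Nat.eq_dec i n) as [->|Hne].
  - rewrite Nat.eqb_refl. rewrite (fsum_ext _ _ (fun _ => 0)). rewrite fsum_zero; lra.
    intros j Hj. destruct (Nat.eqb_spec j n); [lia|auto].
  - rewrite IHn by lia. destruct (Nat.eqb_spec n i); [lia|lra].
Qed.
Lemma fsum_abs n f : Rabs (fsum n f) <= fsum n (fun i => Rabs (f i)).
Proof. induction n; simpl. rewrite Rabs_R0; lra. eapply Rle_trans; [apply Rabs_triang|lra]. Qed.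
Lemma fsum_le n f g : (forall i, (i < n)%nat -> f i <= g i) -> fsum n f <= fsum n g.
Proof. induction n; simpl; intros H; [lra|]. assert (fsum n f <= fsum n g) by (apply IHn; intros; apply H; lia). specialize (H n ltac:(lia)). lra. Qed.
Lemma fsum_nonneg n f : (forall i, (i < n)%nat -> 0 <= f i) -> 0 <= fsum n f.
Proof. intros H. rewrite <- (fsum_zero n). apply fsum_le. auto. Qed.
Lemma fsum_sumf n k (f : nat -> nat -> R) :
  fsum n (fun p => sum_f_R0 (fun l => f p l) k) = sum_f_R0 (fun l => fsum n (fun p => f p l)) k.
Proof.
  induction k; simpl. reflexivity. rewrite fsum_plus. rewrite IHk. reflexivity.
Qed.
Lemma prod_sums n m f c g :
  fsum n f * c * fsum m g = fsum n (fun i => fsum m (fun j => f i * c * g j)).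
Proof.
  rewrite <- fsum_scal_r. rewrite <- fsum_scal_r. apply fsum_ext; intros i _.
  rewrite <- fsum_scal_l. apply fsum_ext; intros; ring.
Qed.
Lemma sum_scal3 n a f b : a * fsum n f * b = fsum n (fun i => a * f i * b).
Proof. rewrite <- fsum_scal_l, <- fsum_scal_r. reflexivity. Qed.

Definition lin (n : nat) (N : mat) (x : vec) : vec := fun i => fsum n (fun j => N i j * x j).
Definition aff (n : nat) (N : mat) (w x : vec) : vec := fun i => lin n N x i + w i.
Definition quad (n : nat) (M : mat) (v : vec) (c : R) (x : vec) : R := bilin n M x x + dot n v x + c.
Definition Q1 n (G N N' : mat) : mat := fun i j => fsum n (fun p => fsum n (fun q => N p i * G p q * N' q j)).
Definition L1 n (G N : mat) (w : vec) (N' : mat) (w' : vec) : vec :=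
  fun i => fsum n (fun p => fsum n (fun q => N p i * G p q * w' q + w p * G p q * N' q i)).

Lemma bilin_addl n G u u' v : bilin n G (fun i => u i + u' i) v = bilin n G u v + bilin n G u' v.
Proof. unfold bilin. rewrite <- fsum_plus. apply fsum_ext; intros. rewrite <- fsum_plus. apply fsum_ext; intros; ring. Qed.
Lemma bilin_addr n G u v v' : bilin n G u (fun i => v i + v' i) = bilin n G u v + bilin n G u v'.
Proof. unfold bilin. rewrite <- fsum_plus. apply fsum_ext; intros. rewrite <- fsum_plus. apply fsum_ext; intros; ring. Qed.
Lemma dot_add n v v' x : dot n (fun i => v i + v' i) x = dot n v x + dot n v' x.
Proof. unfold dot. rewrite <- fsum_plus. apply fsum_ext; intros; ring. Qed.

Lemma fsum4 n (F : nat -> nat -> nat -> nat -> R) :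
  fsum n (fun p => fsum n (fun q => fsum n (fun i => fsum n (fun j => F p q i j)))) =
  fsum n (fun i => fsum n (fun j => fsum n (fun p => fsum n (fun q => F p q i j)))).
Proof.
  transitivity (fsum n (fun p => fsum n (fun i => fsum n (fun q => fsum n (fun j => F p q i j))))).
  { apply fsum_ext; intros p _. apply (fsum_swap n n (fun q i => fsum n (fun j => F p q i j))). }
  rewrite (fsum_swap n n (fun p i => fsum n (fun q => fsum n (fun j => F p q i j)))).
  apply fsum_ext; intros i _.
  transitivity (fsum n (fun p => fsum n (fun j => fsum n (fun q => F p q i j)))).
  { apply fsum_ext; intros p _. apply (fsum_swap n n (fun q j => F p q i j)). }
  apply (fsum_swap n n (fun p j => fsum n (fun q => F p q i j))).
Qed.


Lemma fsum3 n (F : nat -> nat -> nat -> R) :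
  fsum n (fun p => fsum n (fun q => fsum n (fun i => F p q i))) =
  fsum n (fun i => fsum n (fun p => fsum n (fun q => F p q i))).
Proof.
  transitivity (fsum n (fun p => fsum n (fun i => fsum n (fun q => F p q i)))).
  { apply fsum_ext; intros p _. apply (fsum_swap n n (fun q i => F p q i)). }
  apply (fsum_swap n n (fun p i => fsum n (fun q => F p q i))).
Qed.

Lemma bilin_lin_lin n G N N' x : bilin n G (lin n N x) (lin n N' x) = bilin n (Q1 n G N N') x x.
Proof.
  unfold bilin, lin, Q1.
  transitivity (fsum n (fun p => fsum n (fun q => fsum n (fun i => fsum n (fun j =>
     N p i * x i * G p q * (N' q j * x j)))))).
  { apply fsum_ext; intros p _; apply fsum_ext; intros q _. apply prod_sums. }
  rewrite fsum4. apply fsum_ext; intros i _; apply fsum_ext; intros j _.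
  rewrite sum_scal3. apply fsum_ext; intros p _. rewrite <- fsum_scal_l, <- fsum_scal_r.
  apply fsum_ext; intros; ring.
Qed.

Lemma bilin_lin_w n G N w x :
  bilin n G (lin n N x) w = dot n (fun i => fsum n (fun p => fsum n (fun q => N p i * G p q * w q))) x.
Proof.
  unfold bilin, lin, dot.
  transitivity (fsum n (fun p => fsum n (fun q => fsum n (fun i => N p i * G p q * w q * x i)))).
  { apply fsum_ext; intros p _; apply fsum_ext; intros q _. rewrite <- !fsum_scal_r.
    apply fsum_ext; intros; ring. }
  rewrite fsum3. apply fsum_ext; intros i _. rewrite <- fsum_scal_r. apply fsum_ext; intros p _.
  rewrite <- fsum_scal_r. apply fsum_ext; intros; ring.
Qed.

Lemma bilin_w_lin n G w N' x :
  bilin n G w (lin n N' x) = dot n (fun i => fsum n (fun p => fsum n (fun q => w p * G p q * N' q i))) x.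
Proof.
  unfold bilin, lin, dot.
  transitivity (fsum n (fun p => fsum n (fun q => fsum n (fun i => w p * G p q * N' q i * x i)))).
  { apply fsum_ext; intros p _; apply fsum_ext; intros q _. rewrite <- !fsum_scal_l.
    apply fsum_ext; intros; ring. }
  rewrite fsum3. apply fsum_ext; intros i _. rewrite <- fsum_scal_r. apply fsum_ext; intros p _.
  rewrite <- fsum_scal_r. apply fsum_ext; intros; ring.
Qed.

Lemma expand1 n G N w N' w' x :
  bilin n G (aff n N w x) (aff n N' w' x) = quad n (Q1 n G N N') (L1 n G N w N' w') (bilin n G w w') x.
Proof.
  unfold aff, quad. rewrite bilin_addl, !bilin_addr.
  rewrite bilin_lin_lin, bilin_lin_w, bilin_w_lin.
  assert (dot n (L1 n G N w N' w') x =
    dot n (fun i => fsum n (fun p => fsum n (fun q => N p i * G p q * w' q))) x +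
    dot n (fun i => fsum n (fun p => fsum n (fun q => w p * G p q * N' q i))) x).
  { rewrite <- dot_add. unfold dot, L1. apply fsum_ext; intros i _. f_equal.
    rewrite <- fsum_plus. apply fsum_ext; intros. apply fsum_plus. }
  rewrite H. ring.
Qed.

Definition Q2 (lam : vec) (N : mat) : mat := fun i j => - (lam i * N i j).
Definition L2 n (lam mu : vec) (N : mat) (w : vec) : vec :=
  fun j => fsum n (fun i => lam i * mu i * N i j) - lam j * w j.
Definition K2 n (lam mu w : vec) : R := fsum n (fun i => lam i * mu i * w i).

Lemma expand2 n lam mu N w x :
  dot n (drift lam mu x) (aff n N w x) = quad n (Q2 lam N) (L2 n lam mu N w) (K2 n lam mu w) x.
Proof.
  unfold dot, drift, aff, lin, quad, bilin, Q2, L2, K2.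
  assert (HL : fsum n (fun i => lam i * (mu i - x i) * (fsum n (fun j => N i j * x j) + w i)) =
     fsum n (fun i => fsum n (fun j => x i * - (lam i * N i j) * x j)) +
     fsum n (fun j => fsum n (fun i => lam i * mu i * N i j) * x j) +
     fsum n (fun i => - (lam i * w i * x i)) + fsum n (fun i => lam i * mu i * w i)).
  { transitivity (fsum n (fun i => fsum n (fun j => x i * - (lam i * N i j) * x j)) +
     fsum n (fun i => fsum n (fun j => lam i * mu i * N i j * x j)) +
     fsum n (fun i => - (lam i * w i * x i)) + fsum n (fun i => lam i * mu i * w i)).
    { rewrite <- !fsum_plus. apply fsum_ext; intros i _.
      rewrite <- fsum_plus. rewrite Rmult_plus_distr_l, <- fsum_scal_l.
      assert (Hq : fsum n (fun j => lam i*(mu i - x i)*(N i j * x j)) = fsum n (fun i0 => x i * - (lam i * N i i0) * x i0 + lam i * mu i * N i i0 * x i0)) by (apply fsum_ext; intros; ring).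
      rewrite Hq; ring. }
    f_equal. f_equal. f_equal. rewrite fsum_swap. apply fsum_ext; intros j _.
    rewrite <- fsum_scal_r. apply fsum_ext; intros; ring. }
  rewrite HL.
  assert (HR : fsum n (fun i => (fsum n (fun i0 => lam i0 * mu i0 * N i0 i) - lam i * w i) * x i) =
     fsum n (fun j => fsum n (fun i => lam i * mu i * N i j) * x j) + fsum n (fun i => - (lam i * w i * x i))).
  { rewrite <- fsum_plus. apply fsum_ext; intros; ring. }
  unfold dot. rewrite HR. ring.
Qed.

Definition Q3 (G : mat) (lam : vec) : mat := fun i j => lam i * G i j * lam j.
Definition L3 n (G : mat) (lam mu : vec) : vec := fun i =>
  - (fsum n (fun q => lam i * G i q * lam q * mu q) + fsum n (fun p => lam p * mu p * G p i * lam i)).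
Definition K3 n (G : mat) (lam mu : vec) : R := bilin n G (fun i => lam i * mu i) (fun i => lam i * mu i).

Lemma expand3 n G lam mu x :
  bilin n G (drift lam mu x) (drift lam mu x) = quad n (Q3 G lam) (L3 n G lam mu) (K3 n G lam mu) x.
Proof.
  unfold drift, quad, bilin, Q3, L3, K3, dot.
  transitivity (fsum n (fun i => fsum n (fun j => x i * (lam i * G i j * lam j) * x j)) +
     (fsum n (fun i => fsum n (fun q => - (lam i * G i q * lam q * mu q * x i))) +
      fsum n (fun p => fsum n (fun i => - (lam p * mu p * G p i * lam i * x i)))) +
     fsum n (fun i => fsum n (fun j => lam i * mu i * G i j * (lam j * mu j)))).
  { rewrite <- !fsum_plus. apply fsum_ext; intros i _. rewrite <- !fsum_plus.
    apply fsum_ext; intros; ring. }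
  f_equal. f_equal.
  rewrite (fsum_swap n n (fun p i => - (lam p * mu p * G p i * lam i * x i))).
  rewrite <- fsum_plus. apply fsum_ext; intros i _.
  transitivity (-(fsum n (fun q => lam i * G i q * lam q * mu q)) * x i +
                - (fsum n (fun p => lam p * mu p * G p i * lam i)) * x i); [|ring].
  f_equal; rewrite <- fsum_opp, <- fsum_scal_r; apply fsum_ext; intros; ring.
Qed.


Lemma dR_const (c y : R) : is_derive (fun _ => c) y 0.
Proof. exact (is_derive_const (K:=R_AbsRing) (V:=R_NormedModule) c y). Qed.
Lemma dR_id (y : R) : is_derive (fun z => z) y 1.
Proof. exact (is_derive_id (K:=R_AbsRing) y). Qed.
Lemma dR_plus (f g : R -> R) y df dg : is_derive f y df -> is_derive g y dg -> is_derive (fun z => f z + g z) y (df + dg).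
Proof. intros H1 H2. exact (is_derive_plus (K:=R_AbsRing) (V:=R_NormedModule) f g y df dg H1 H2). Qed.
Lemma dR_mult (f g : R -> R) y df dg : is_derive f y df -> is_derive g y dg -> is_derive (fun z => f z * g z) y (df * g y + f y * dg).
Proof. intros H1 H2. exact (is_derive_mult (K:=R_AbsRing) f g y df dg H1 H2 Rmult_comm). Qed.
Lemma dR_ext (f g : R -> R) y l l' : (forall z, f z = g z) -> l = l' -> is_derive f y l -> is_derive g y l'.
Proof. intros H <- H1. eapply is_derive_ext; eauto. Qed.

Lemma deriv_of f x l : is_derive f x l -> deriv f x = l /\ has_deriv f x.
Proof.
  intros H. apply is_derive_Reals in H.
  assert (Hex : exists l, derivable_pt_lim f x l) by eauto.
  split; [|exact Hex].
  unfold deriv. pose proof (ClassicalEpsilon.epsilon_spec (inhabits 0) (fun l => derivable_pt_lim f x l) Hex) as He.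
  eapply uniqueness_limite; eauto.
Qed.

Lemma is_derive_fsum n (f : nat -> R -> R) (d : nat -> R) y :
  (forall k, (k < n)%nat -> is_derive (f k) y (d k)) ->
  is_derive (fun z => fsum n (fun k => f k z)) y (fsum n d).
Proof.
  induction n; intros H; simpl.
  - apply dR_const.
  - apply (dR_plus (fun z => fsum n (fun k => f k z)) (f n)).
    + apply IHn; intros; apply H; lia.
    + apply H; lia.
Qed.

Definition hatM (M : mat) : mat := fun i j => M i j + M j i.
Definition dl (p i : nat) : R := if Nat.eqb p i then 1 else 0.

Lemma fsum_dl_l n i f : (i < n)%nat -> fsum n (fun j => dl j i * f j) = f i.
Proof. intros H. rewrite <- (fsum_delta n i f H). apply fsum_ext; intros j _. unfold dl. destruct (Nat.eqb j i); ring. Qed.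
Lemma fsum_dl_r n i f : (i < n)%nat -> fsum n (fun j => f j * dl j i) = f i.
Proof. intros H. rewrite <- (fsum_delta n i f H). apply fsum_ext; intros j _. unfold dl. destruct (Nat.eqb j i); ring. Qed.

Lemma upd_same x i : forall p, upd x i (x i) p = x p.
Proof. intros p. unfold upd. destruct (Nat.eqb_spec p i); subst; auto. Qed.

Lemma is_derive_upd x i p y : is_derive (fun h => upd x i h p) y (dl p i).
Proof.
  unfold upd, dl. destruct (Nat.eqb p i).
  - apply dR_id.
  - apply dR_const.
Qed.

Lemma grad_quad_is_derive n (A : mat) (b : vec) (c : R) x i : (i < n)%nat ->
  is_derive (fun h => bilin n A (upd x i h) (upd x i h) + dot n b (upd x i h) + c) (x i)
    (aff n (hatM A) b x i).
Proof.
  intros Hi.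
  assert (H1 : is_derive (fun h => bilin n A (upd x i h) (upd x i h)) (x i)
     (fsum n (fun p => fsum n (fun q => (dl p i * A p q + upd x i (x i) p * 0) * upd x i (x i) q + upd x i (x i) p * A p q * dl q i)))).
  { unfold bilin. apply is_derive_fsum; intros p Hp.
    apply is_derive_fsum; intros q Hq.
    apply (dR_mult (fun h => upd x i h p * A p q) (fun h => upd x i h q)).
    - apply (dR_mult (fun h => upd x i h p) (fun _ => A p q)).
      + apply is_derive_upd. + apply dR_const.
    - apply is_derive_upd. }
  assert (H2 : is_derive (fun h => dot n b (upd x i h)) (x i)
     (fsum n (fun p => 0 * upd x i (x i) p + b p * dl p i))).
  { unfold dot. apply is_derive_fsum; intros p Hp.
    apply (dR_mult (fun _ => b p) (fun h => upd x i h p)).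
    + apply dR_const. + apply is_derive_upd. }
  pose proof (dR_plus _ _ _ _ _ (dR_plus _ _ _ _ _ H1 H2) (dR_const c (x i))) as H.
  eapply dR_ext; [intros; reflexivity| |exact H].
  setoid_rewrite upd_same.
  assert (E1' : fsum n (fun p => fsum n (fun q => (dl p i * A p q + x p * 0) * x q + x p * A p q * dl q i))
     = fsum n (fun q => A i q * x q) + fsum n (fun p => x p * A p i)).
  { transitivity (fsum n (fun p => fsum n (fun q => dl p i * (A p q * x q))) + fsum n (fun p => fsum n (fun q => x p * A p q * dl q i))).
    { rewrite <- fsum_plus. apply fsum_ext; intros p _. rewrite <- fsum_plus. apply fsum_ext; intros; ring. }
    f_equal.
    - rewrite <- (fsum_dl_l n i (fun p => fsum n (fun q => A p q * x q)) Hi).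
      apply fsum_ext; intros p _. apply fsum_scal_l.
    - etransitivity; [apply (fsum_swap n n (fun p q => x p * A p q * dl q i))|].
      rewrite <- (fsum_dl_r n i (fun q => fsum n (fun p => x p * A p q)) Hi).
      apply fsum_ext; intros q _. apply fsum_scal_r. }
  rewrite E1'.
  assert (E2' : fsum n (fun p => 0 * x p + b p * dl p i) = b i).
  { rewrite <- (fsum_dl_r n i b Hi). apply fsum_ext; intros; ring. }
  rewrite E2'. unfold aff, lin, hatM.
  rewrite (fsum_ext n (fun j => (A i j + A j i) * x j) (fun j => A i j * x j + x j * A j i)) by (intros; ring). rewrite fsum_plus; lra.
Qed.


Definition Sq n (A : R -> mat) (b : R -> vec) (c : R -> R) : R -> vec -> R :=
  fun t x => bilin n (A t) x x + dot n (b t) x + c t.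

Lemma grad_Sq n A b c t x i : (i < n)%nat ->
  grad (Sq n A b c) t x i = aff n (hatM (A t)) (b t) x i /\
  has_deriv (fun h => Sq n A b c t (upd x i h)) (x i).
Proof.
  intros Hi. unfold grad. apply deriv_of. unfold Sq. apply grad_quad_is_derive; auto.
Qed.

Lemma hess_Sq n A b c t x i j : (i < n)%nat -> (j < n)%nat ->
  hess (Sq n A b c) t x i j = hatM (A t) i j /\
  has_deriv (fun h => grad (Sq n A b c) t (upd x j h) i) (x j).
Proof.
  intros Hi Hj. unfold hess. apply deriv_of.
  eapply dR_ext.
  - intros h. symmetry. apply (proj1 (grad_Sq n A b c t (upd x j h) i Hi)).
  - reflexivity.
  - unfold aff, lin.
    assert (HH : is_derive (fun h => fsum n (fun q => hatM (A t) i q * upd x j h q) + b t i) (x j)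
      (fsum n (fun q => 0 * upd x j (x j) q + hatM (A t) i q * dl q j) + 0)).
    { apply (dR_plus (fun h => fsum n (fun q => hatM (A t) i q * upd x j h q)) (fun _ => b t i)).
      2: apply dR_const.
      apply is_derive_fsum; intros q Hq.
      apply (dR_mult (fun _ => hatM (A t) i q) (fun h => upd x j h q)).
      apply dR_const. apply is_derive_upd. }
    eapply dR_ext; [intros; reflexivity| |exact HH].
    rewrite <- (fsum_dl_r n j (fun q => hatM (A t) i q) Hj).
    rewrite Rplus_0_r. apply fsum_ext; intros; ring.
Qed.

Lemma dtime_Sq n A b c t x dA db dc :
  (forall i j, (i < n)%nat -> (j < n)%nat -> is_derive (fun s => A s i j) t (dA i j)) ->
  (forall i, (i < n)%nat -> is_derive (fun s => b s i) t (db i)) ->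
  is_derive c t dc ->
  is_derive (fun s => Sq n A b c s x) t (quad n dA db dc x).
Proof.
  intros HA Hb Hc. unfold Sq, quad, bilin, dot.
  apply (dR_plus (fun s => fsum n (fun i => fsum n (fun j => x i * A s i j * x j)) + fsum n (fun i => b s i * x i)) c).
  2: exact Hc.
  apply (dR_plus (fun s => fsum n (fun i => fsum n (fun j => x i * A s i j * x j))) (fun s => fsum n (fun i => b s i * x i))).
  - apply is_derive_fsum; intros i Hi. apply is_derive_fsum; intros j Hj.
    pose proof (dR_mult (fun s => x i * A s i j) (fun _ => x j) t _ _
       (dR_mult (fun _ => x i) (fun s => A s i j) t _ _ (dR_const (x i) t) (HA i j Hi Hj)) (dR_const (x j) t)) as H.
    eapply dR_ext; [intros; reflexivity| |exact H]. simpl. ring.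
  - apply is_derive_fsum; intros i Hi.
    pose proof (dR_mult (fun s => b s i) (fun _ => x i) t _ _ (Hb i Hi) (dR_const (x i) t)) as H.
    eapply dR_ext; [intros; reflexivity| |exact H]. simpl. ring.
Qed.


Lemma isp_ext (a b : nat -> R) (s l l' : R) : (forall k, a k = b k) -> l = l' -> is_pseries a s l -> is_pseries b s l'.
Proof. intros H <- H1. eapply is_pseries_ext; eauto. Qed.

Lemma isp_scal (a : nat -> R) c s l : is_pseries a s l -> is_pseries (fun k => c * a k) s (c * l).
Proof. intros H. apply (is_pseries_scal (K:=R_AbsRing) (V:=R_NormedModule) c a s l); auto. apply Rmult_comm. Qed.

Lemma isp_plus (a b : nat -> R) s la lb : is_pseries a s la -> is_pseries b s lb -> is_pseries (fun k => a k + b k) s (la + lb).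
Proof. intros H1 H2. exact (is_pseries_plus (K:=R_AbsRing) (V:=R_NormedModule) a b s la lb H1 H2). Qed.

Lemma isp_delta s q : is_pseries (fun k => dl k 0 * q) s q.
Proof.
  unfold is_pseries, is_series.
  eapply filterlim_ext; [|apply filterlim_const].
  intros N. simpl. rewrite sum_n_Reals. induction N; simpl.
  - unfold dl; simpl. change (scal one (1 * q)) with (1 * (1 * q)). ring.
  - rewrite <- IHN. change (scal (mult s (pow_n s N)) (dl (S N) 0 * q)) with ((s * (pow_n s N)) * (dl (S N) 0 * q)).
    unfold dl; simpl. ring.
Qed.

Lemma isp_fsum n (a : nat -> nat -> R) s (l : nat -> R) :
  (forall p, (p < n)%nat -> is_pseries (a p) s (l p)) ->
  is_pseries (fun k => fsum n (fun p => a p k)) s (fsum n l).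
Proof.
  induction n; intros H; simpl.
  - apply isp_ext with (a := fun k => dl k 0 * 0) (l := 0); [intros; simpl; ring | simpl; ring | ].
    apply isp_delta.
  - apply isp_plus. apply IHn; intros; apply H; lia. apply H; lia.
Qed.


Lemma sumf_scal (f : nat -> R) c k : sum_f_R0 (fun l => c * f l) k = c * sum_f_R0 f k.
Proof. induction k; simpl; [ring|rewrite IHk; ring]. Qed.
Lemma sumf_plus (f g : nat -> R) k : sum_f_R0 (fun l => f l + g l) k = sum_f_R0 f k + sum_f_R0 g k.
Proof. induction k; simpl; [ring|rewrite IHk; ring]. Qed.
Lemma sumf_ext (f g : nat -> R) k : (forall l, (l <= k)%nat -> f l = g l) -> sum_f_R0 f k = sum_f_R0 g k.
Proof. intros H. induction k; simpl. apply H; lia. rewrite IHk by (intros; apply H; lia). rewrite H; auto. Qed.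
Lemma sumf_abs (f : nat -> R) k : Rabs (sum_f_R0 f k) <= sum_f_R0 (fun l => Rabs (f l)) k.
Proof. induction k; simpl. lra. eapply Rle_trans; [apply Rabs_triang|lra]. Qed.
Lemma sumf_le (f g : nat -> R) k : (forall l, (l <= k)%nat -> f l <= g l) -> sum_f_R0 f k <= sum_f_R0 g k.
Proof. intros H. induction k; simpl. apply H; lia. assert (sum_f_R0 f k <= sum_f_R0 g k) by (apply IHk; intros; apply H; lia). specialize (H (S k) ltac:(lia)). lra. Qed.
Lemma sumf_const c k : sum_f_R0 (fun _ => c) k = INR (S k) * c.
Proof. induction k. simpl; ring. rewrite S_INR. simpl sum_f_R0. rewrite IHk. rewrite S_INR. ring. Qed.

Lemma rad_bound (a : nat -> R) K D s : 0 < D ->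
  (forall k, Rabs (a k) <= K * D ^ k) -> Rabs s < / D -> Rbar_lt (Rabs s) (CV_radius a).
Proof.
  intros HD Hb Hs.
  apply Rbar_lt_le_trans with (Finite (/ D)). simpl; auto.
  destruct (CV_radius_bounded a) as [Hub _]. apply Hub.
  exists K. intros k. rewrite Rabs_mult. rewrite <- RPow_abs.
  rewrite (Rabs_pos_eq (/ D)) by (left; apply Rinv_0_lt_compat; auto).
  apply Rle_trans with (K * D ^ k * (/ D) ^ k).
  apply Rmult_le_compat_r; auto. apply pow_le. left; apply Rinv_0_lt_compat; auto.
  rewrite Rmult_assoc, <- Rpow_mult_distr, Rinv_r by lra. rewrite pow1. lra.
Qed.

Lemma isp_val (a : nat -> R) s : Rbar_lt (Rabs s) (CV_radius a) -> is_pseries a s (PSeries a s).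
Proof. intros H. apply PSeries_correct. apply CV_radius_inside; auto. Qed.

Lemma isp_mult3 (a b : nat -> R) g s la lb :
  is_pseries a s la -> is_pseries b s lb ->
  Rbar_lt (Rabs s) (CV_radius a) -> Rbar_lt (Rabs s) (CV_radius b) ->
  is_pseries (fun k => sum_f_R0 (fun l => a l * g * b (k - l)%nat) k) s (la * g * lb).
Proof.
  intros H1 H2 R1 R2.
  pose proof (isp_scal _ g _ _ (is_pseries_mult a b s la lb H1 H2 R1 R2)) as H.
  refine (isp_ext _ _ _ _ _ _ _ H).
  - intros k. unfold PS_mult. rewrite <- sumf_scal. apply sumf_ext; intros; ring.
  - change (@eq R (g * (la * lb)) (la * g * lb)); ring.
Qed.


Record st := mkst { sM : mat; sv : vec; sc : R }.
Definition st0 : st := mkst (fun _ _ => 0) (fun _ => 0) 0.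
Definition tr2 n (i j : nat) : R := if andb (Nat.ltb i n) (Nat.ltb j n) then 1 else 0.
Definition tr1 n (i : nat) : R := if Nat.ltb i n then 1 else 0.

Definition RM n lam (C Cinv : mat) kappa (k : nat) (h : nat -> st) : mat := fun i j =>
  (kappa + 1) / 2 * sum_f_R0 (fun l => Q1 n C (hatM (sM (h l))) (hatM (sM (h (k - l)%nat))) i j) k
  + (kappa + 1) * Q2 lam (hatM (sM (h k))) i j + kappa / 2 * (dl k 0 * Q3 Cinv lam i j).
Definition Rv n lam mu (C Cinv : mat) kappa (k : nat) (h : nat -> st) : vec := fun i =>
  (kappa + 1) / 2 * sum_f_R0 (fun l => L1 n C (hatM (sM (h l))) (sv (h l)) (hatM (sM (h (k - l)%nat))) (sv (h (k - l)%nat)) i) k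
  + (kappa + 1) * L2 n lam mu (hatM (sM (h k))) (sv (h k)) i + kappa / 2 * (dl k 0 * L3 n Cinv lam mu i).
Definition Rc n lam mu (C Cinv : mat) kappa (k : nat) (h : nat -> st) : R :=
  (kappa + 1) / 2 * sum_f_R0 (fun l => bilin n C (sv (h l)) (sv (h (k - l)%nat))) k
  + (kappa + 1) * K2 n lam mu (sv (h k)) + kappa / 2 * (dl k 0 * K3 n Cinv lam mu).

Definition stepf n lam mu C Cinv kappa (k : nat) (h : nat -> st) : st :=
  mkst (fun i j => tr2 n i j * (/ INR (S k) * RM n lam C Cinv kappa k h i j))
       (fun i => tr1 n i * (/ INR (S k) * Rv n lam mu C Cinv kappa k h i))
       (/ INR (S k) * Rc n lam mu C Cinv kappa k h).

Fixpoint hist n lam mu C Cinv kappa (k : nat) : nat -> st :=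
  match k with
  | O => fun _ => st0
  | S k' => fun m => if Nat.leb m k' then hist n lam mu C Cinv kappa k' m
                     else stepf n lam mu C Cinv kappa k' (hist n lam mu C Cinv kappa k')
  end.
Definition coef n lam mu C Cinv kappa (k : nat) : st := hist n lam mu C Cinv kappa k k.

Lemma hist_coef n lam mu C Cinv kappa k m : (m <= k)%nat -> hist n lam mu C Cinv kappa k m = coef n lam mu C Cinv kappa m.
Proof.
  induction k; intros H.
  - assert (m = 0)%nat by lia. subst. reflexivity.
  - simpl. destruct (Nat.leb_spec m k).
    + apply IHk; auto.
    + assert (m = S k) by lia. subst. unfold coef. assert (Hb : Nat.leb (S k) k = false) by (apply Nat.leb_gt; lia). cbn [hist]. rewrite Hb. reflexivity.
Qed.

Lemma coef0 n lam mu C Cinv kappa : coef n lam mu C Cinv kappa 0 = st0.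
Proof. reflexivity. Qed.

Lemma coef_S_eq n lam mu C Cinv kappa k :
  coef n lam mu C Cinv kappa (S k) = stepf n lam mu C Cinv kappa k (hist n lam mu C Cinv kappa k).
Proof. unfold coef. assert (Hb : Nat.leb (S k) k = false) by (apply Nat.leb_gt; lia). cbn [hist]. rewrite Hb. reflexivity. Qed.

Lemma RM_ext n lam C Cinv kappa k h h' i j : (forall l, (l <= k)%nat -> h l = h' l) ->
  RM n lam C Cinv kappa k h i j = RM n lam C Cinv kappa k h' i j.
Proof.
  intros E. unfold RM. rewrite E by lia.
  rewrite (sumf_ext _ (fun l => Q1 n C (hatM (sM (h' l))) (hatM (sM (h' (k - l)%nat))) i j)); auto.
  intros l Hl. rewrite !E by lia. reflexivity.
Qed.
Lemma Rv_ext n lam mu C Cinv kappa k h h' i : (forall l, (l <= k)%nat -> h l = h' l) ->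
  Rv n lam mu C Cinv kappa k h i = Rv n lam mu C Cinv kappa k h' i.
Proof.
  intros E. unfold Rv. rewrite E by lia.
  rewrite (sumf_ext _ (fun l => L1 n C (hatM (sM (h' l))) (sv (h' l)) (hatM (sM (h' (k - l)%nat))) (sv (h' (k - l)%nat)) i)); auto.
  intros l Hl. rewrite !E by lia. reflexivity.
Qed.
Lemma Rc_ext n lam mu C Cinv kappa k h h' : (forall l, (l <= k)%nat -> h l = h' l) ->
  Rc n lam mu C Cinv kappa k h = Rc n lam mu C Cinv kappa k h'.
Proof.
  intros E. unfold Rc. rewrite E by lia.
  rewrite (sumf_ext _ (fun l => bilin n C (sv (h' l)) (sv (h' (k - l)%nat)))); auto.
  intros l Hl. rewrite !E by lia. reflexivity.
Qed.

Lemma coef_succ n lam mu C Cinv kappa k :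
  let h := coef n lam mu C Cinv kappa in
  (forall i j, sM (h (S k)) i j = tr2 n i j * (/ INR (S k) * RM n lam C Cinv kappa k h i j)) /\
  (forall i, sv (h (S k)) i = tr1 n i * (/ INR (S k) * Rv n lam mu C Cinv kappa k h i)) /\
  sc (h (S k)) = / INR (S k) * Rc n lam mu C Cinv kappa k h.
Proof.
  intros h. unfold h. rewrite coef_S_eq. unfold stepf. cbn [sM sv sc].
  assert (E : forall l, (l <= k)%nat -> hist n lam mu C Cinv kappa k l = coef n lam mu C Cinv kappa l)
    by (intros; apply hist_coef; auto).
  split; [|split].
  - intros i j. rewrite (RM_ext _ _ _ _ _ _ _ _ _ _ E). reflexivity.
  - intros i. rewrite (Rv_ext _ _ _ _ _ _ _ _ _ _ E). reflexivity.
  - rewrite (Rc_ext _ _ _ _ _ _ _ _ _ E). reflexivity.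
Qed.


Definition Gs n (G : mat) := fsum n (fun p => fsum n (fun q => Rabs (G p q))).

Lemma term_le_sum n f i : (i < n)%nat -> Rabs (f i) <= fsum n (fun i => Rabs (f i)).
Proof.
  induction n; intros H; [lia|]. simpl.
  assert (0 <= fsum n (fun i => Rabs (f i))) by (apply fsum_nonneg; intros; apply Rabs_pos).
  destruct (Nat.eq_dec i n). subst; lra. pose proof (IHn ltac:(lia)). pose proof (Rabs_pos (f n)). lra.
Qed.

Lemma Gs_nonneg n G : 0 <= Gs n G.
Proof. apply fsum_nonneg; intros; apply fsum_nonneg; intros; apply Rabs_pos. Qed.

Lemma bound_gen n G (F : nat -> nat -> R) a :
  (forall p q, Rabs (F p q) <= a * Rabs (G p q)) ->
  Rabs (fsum n (fun p => fsum n (fun q => F p q))) <= a * Gs n G.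
Proof.
  intros H. eapply Rle_trans; [apply fsum_abs|].
  unfold Gs. rewrite <- fsum_scal_l. apply fsum_le; intros p _.
  eapply Rle_trans; [apply fsum_abs|]. rewrite <- fsum_scal_l. apply fsum_le; intros q _. apply H.
Qed.

Lemma abs3 x y z a b : Rabs x <= a -> Rabs z <= b -> Rabs (x * y * z) <= a * b * Rabs y.
Proof.
  intros. rewrite !Rabs_mult.
  assert (0 <= Rabs x) by apply Rabs_pos. assert (0 <= Rabs y) by apply Rabs_pos. assert (0 <= Rabs z) by apply Rabs_pos.
  replace (a * b * Rabs y) with (a * Rabs y * b) by ring.
  apply Rmult_le_compat; try apply Rmult_le_compat; try lra; try nra.
Qed.

Lemma bound_Q1 n G N N' a b i j : (forall p i, Rabs (N p i) <= a) -> (forall q j, Rabs (N' q j) <= b) ->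
  Rabs (Q1 n G N N' i j) <= a * b * Gs n G.
Proof. intros HN HN'. unfold Q1. apply (bound_gen n G _ (a * b)). intros p q. apply abs3; auto. Qed.

Lemma bound_L1 n G N w N' w' a a' b b' i : (forall p i, Rabs (N p i) <= a) -> (forall p, Rabs (w p) <= a') ->
  (forall q j, Rabs (N' q j) <= b) -> (forall q, Rabs (w' q) <= b') ->
  Rabs (L1 n G N w N' w' i) <= (a * b' + a' * b) * Gs n G.
Proof.
  intros. unfold L1. apply bound_gen. intros p q.
  eapply Rle_trans; [apply Rabs_triang|]. rewrite Rmult_plus_distr_r.
  apply Rplus_le_compat; apply abs3; auto.
Qed.

Lemma bound_bilin n G w w' a b : (forall p, Rabs (w p) <= a) -> (forall q, Rabs (w' q) <= b) ->
  Rabs (bilin n G w w') <= a * b * Gs n G.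
Proof. intros. unfold bilin. apply (bound_gen n G _ (a * b)). intros p q. apply abs3; auto. Qed.

Definition Ls n (lam : vec) := fsum n (fun i => Rabs (lam i)).
Definition LMs n (lam mu : vec) := fsum n (fun i => Rabs (lam i * mu i)).

Lemma Rabs_mul_le x y a b : Rabs x <= a -> Rabs y <= b -> Rabs (x * y) <= a * b.
Proof. intros. rewrite Rabs_mult. apply Rmult_le_compat; auto; apply Rabs_pos. Qed.

Lemma bound_Q2 n lam N a i j : (i < n)%nat -> (forall p q, Rabs (N p q) <= a) -> Rabs (Q2 lam N i j) <= Ls n lam * a.
Proof. intros Hi H. unfold Q2. rewrite Rabs_Ropp. apply Rabs_mul_le; auto. apply (term_le_sum n lam i Hi). Qed.

Lemma bound_L2 n lam mu N w a a' j : (j < n)%nat -> (forall p q, Rabs (N p q) <= a) -> (forall p, Rabs (w p) <= a') ->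
  Rabs (L2 n lam mu N w j) <= LMs n lam mu * a + Ls n lam * a'.
Proof.
  intros Hj H1 H2. unfold L2. unfold Rminus. eapply Rle_trans; [apply Rabs_triang|]. rewrite Rabs_Ropp.
  apply Rplus_le_compat.
  - eapply Rle_trans; [apply fsum_abs|]. unfold LMs. rewrite <- fsum_scal_r. apply fsum_le; intros.
    apply Rabs_mul_le; auto. apply Req_le; auto.
  - apply Rabs_mul_le; auto. apply (term_le_sum n lam j Hj).
Qed.

Lemma bound_K2 n lam mu w a' : (forall p, Rabs (w p) <= a') -> Rabs (K2 n lam mu w) <= LMs n lam mu * a'.
Proof.
  intros H. unfold K2. eapply Rle_trans; [apply fsum_abs|]. unfold LMs. rewrite <- fsum_scal_r. apply fsum_le; intros.
  apply Rabs_mul_le; auto. apply Req_le; auto.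
Qed.


Definition Dc n lam mu C Cinv kappa : R :=
  1 + 2 * Rabs (kappa + 1) * Gs n C + 2 * Rabs (kappa + 1) * Ls n lam + 2 * Rabs (kappa + 1) * LMs n lam mu
  + Rabs kappa * (Gs n (Q3 Cinv lam) + fsum n (fun i => Rabs (L3 n Cinv lam mu i)) + Rabs (K3 n Cinv lam mu)).

Lemma Ls_nonneg n lam : 0 <= Ls n lam. Proof. apply fsum_nonneg; intros; apply Rabs_pos. Qed.
Lemma LMs_nonneg n lam mu : 0 <= LMs n lam mu. Proof. apply fsum_nonneg; intros; apply Rabs_pos. Qed.

Lemma term_le_sum_nn n f i : (i < n)%nat -> (forall j, 0 <= f j) -> f i <= fsum n f.
Proof.
  intros Hi H. pose proof (term_le_sum n f i Hi) as H1.
  rewrite (fsum_ext n (fun i => Rabs (f i)) f) in H1 by (intros; rewrite Rabs_pos_eq; auto).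
  rewrite Rabs_pos_eq in H1; auto.
Qed.
Lemma term_le_Gs n G i j : (i < n)%nat -> (j < n)%nat -> Rabs (G i j) <= Gs n G.
Proof.
  intros Hi Hj. unfold Gs. eapply Rle_trans; [apply (term_le_sum n (G i) j Hj)|].
  apply (term_le_sum_nn n (fun p => fsum n (fun q => Rabs (G p q))) i Hi).
  intros; apply fsum_nonneg; intros; apply Rabs_pos.
Qed.

Lemma Dc_ge1 n lam mu C Cinv kappa : 1 <= Dc n lam mu C Cinv kappa.
Proof.
  unfold Dc. pose proof (Gs_nonneg n C). pose proof (Ls_nonneg n lam). pose proof (LMs_nonneg n lam mu).
  pose proof (Gs_nonneg n (Q3 Cinv lam)). pose proof (Rabs_pos kappa). pose proof (Rabs_pos (kappa+1)).
  pose proof (Rabs_pos (K3 n Cinv lam mu)).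
  assert (0 <= fsum n (fun i => Rabs (L3 n Cinv lam mu i))) by (apply fsum_nonneg; intros; apply Rabs_pos).
  assert (0 <= Rabs (kappa + 1) * Gs n C) by nra. assert (0 <= Rabs (kappa + 1) * Ls n lam) by nra.
  assert (0 <= Rabs (kappa + 1) * LMs n lam mu) by nra.
  assert (0 <= Rabs kappa * (Gs n (Q3 Cinv lam) + fsum n (fun i => Rabs (L3 n Cinv lam mu i)) + Rabs (K3 n Cinv lam mu))) by nra.
  lra.
Qed.

Lemma sum_bound (f : nat -> R) k B : (forall l, (l <= k)%nat -> Rabs (f l) <= B) ->
  Rabs (sum_f_R0 f k) <= INR (S k) * B.
Proof. intros H. eapply Rle_trans; [apply sumf_abs|]. rewrite <- sumf_const. apply sumf_le; auto. Qed.

Lemma dl_abs k : Rabs (dl k 0) <= 1.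
Proof. unfold dl. destruct (Nat.eqb k 0); rewrite ?Rabs_R1, ?Rabs_R0; lra. Qed.

Lemma finish_bound X Sk P D E : 1 <= Sk -> 0 < P -> E <= D -> Rabs X <= Sk * P * E ->
  Rabs (/ Sk * X) <= P * D.
Proof.
  intros HS HP HE HX. rewrite Rabs_mult. rewrite Rabs_pos_eq by (left; apply Rinv_0_lt_compat; lra).
  apply Rle_trans with (/ Sk * (Sk * P * E)). apply Rmult_le_compat_l; auto. left; apply Rinv_0_lt_compat; lra.
  replace (/ Sk * (Sk * P * E)) with (P * E) by (field; lra). apply Rmult_le_compat_l; lra.
Qed.

Lemma tr_cases2 n i j : (tr2 n i j = 0) \/ (tr2 n i j = 1 /\ (i < n)%nat /\ (j < n)%nat).
Proof. unfold tr2. destruct (Nat.ltb_spec i n), (Nat.ltb_spec j n); simpl; auto. Qed.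
Lemma tr_cases1 n i : (tr1 n i = 0) \/ (tr1 n i = 1 /\ (i < n)%nat).
Proof. unfold tr1. destruct (Nat.ltb_spec i n); simpl; auto. Qed.

Lemma combine3 X1 X2 X3 k1 ka Sk P a b c : 1 <= Sk -> 0 < P -> 0 <= a -> 0 <= b -> 0 <= c ->
  Rabs X1 <= Sk * (P * a) -> Rabs X2 <= P * b -> Rabs X3 <= P * c ->
  Rabs (k1 / 2 * X1 + k1 * X2 + ka / 2 * X3) <= Sk * P * (Rabs k1 / 2 * a + Rabs k1 * b + Rabs ka / 2 * c).
Proof.
  intros HS HP Ha Hb Hc B1 B2 B3.
  eapply Rle_trans. apply Rabs_triang. eapply Rle_trans. apply Rplus_le_compat_r. apply Rabs_triang.
  rewrite !Rabs_mult.
  replace (Rabs (k1 / 2)) with (Rabs k1 / 2) by (unfold Rdiv; rewrite Rabs_mult, Rabs_inv, (Rabs_pos_eq 2); lra).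
  replace (Rabs (ka / 2)) with (Rabs ka / 2) by (unfold Rdiv; rewrite Rabs_mult, Rabs_inv, (Rabs_pos_eq 2); lra).
  pose proof (Rabs_pos k1). pose proof (Rabs_pos ka).
  assert (Rabs k1 / 2 * Rabs X1 <= Rabs k1 / 2 * (Sk * (P * a))) by (apply Rmult_le_compat_l; lra).
  assert (Rabs k1 * Rabs X2 <= Rabs k1 * (P * b)) by (apply Rmult_le_compat_l; lra).
  assert (Rabs ka / 2 * Rabs X3 <= Rabs ka / 2 * (P * c)) by (apply Rmult_le_compat_l; lra).
  assert (0 <= P * b) by nra. assert (0 <= P * c) by nra.
  assert (0 <= Rabs k1 * (P * b)) by (apply Rmult_le_pos; lra).
  assert (0 <= Rabs ka / 2 * (P * c)) by (apply Rmult_le_pos; lra).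
  assert (Rabs k1 * (P * b) <= Sk * (Rabs k1 * (P * b))) by nra.
  assert (Rabs ka / 2 * (P * c) <= Sk * (Rabs ka / 2 * (P * c))) by nra.
  nra.
Qed.

Lemma coef_bound n lam mu C Cinv kappa k :
  let h := coef n lam mu C Cinv kappa in let D := Dc n lam mu C Cinv kappa in
  (forall i j, Rabs (sM (h k) i j) <= D ^ k) /\ (forall i, Rabs (sv (h k) i) <= D ^ k) /\ Rabs (sc (h k)) <= D ^ k.
Proof.
  intros h D.
  assert (HD : 1 <= D) by apply Dc_ge1.
  assert (Hpow : forall m, 1 <= D ^ m) by (intros; apply pow_R1_Rle; auto).
  enough (forall k, forall m, (m <= k)%nat ->
    (forall i j, Rabs (sM (h m) i j) <= D ^ m) /\ (forall i, Rabs (sv (h m) i) <= D ^ m) /\ Rabs (sc (h m)) <= D ^ m) by eauto.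
  clear k. intros k. induction k; intros m Hm.
  - assert (m = 0)%nat by lia. subst. unfold h. rewrite coef0. simpl. rewrite Rabs_R0. repeat split; intros; lra.
  - destruct (Nat.eq_dec m (S k)) as [->|Hne]; [|apply IHk; lia].
    assert (IH : forall l, (l <= k)%nat -> (forall i j, Rabs (sM (h l) i j) <= D ^ l) /\ (forall i, Rabs (sv (h l) i) <= D ^ l) /\ Rabs (sc (h l)) <= D ^ l) by auto.
    clear IHk.
    assert (Hhat : forall l, (l <= k)%nat -> forall p q, Rabs (hatM (sM (h l)) p q) <= 2 * D ^ l).
    { intros l Hl p q. unfold hatM. destruct (IH l Hl) as [H1 _].
      eapply Rle_trans; [apply Rabs_triang|]. pose proof (H1 p q). pose proof (H1 q p). lra. }
    assert (Hv : forall l, (l <= k)%nat -> forall p, Rabs (sv (h l) p) <= D ^ l) by (intros; apply IH; auto).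
    assert (Hpk : forall l, (l <= k)%nat -> D ^ l * D ^ (k - l) = D ^ k).
    { intros. rewrite <- pow_add. f_equal. lia. }
    assert (HSk : 1 <= INR (S k)) by (rewrite S_INR; pose proof (pos_INR k); lra).
    assert (HP : 0 < D ^ k) by (specialize (Hpow k); lra).
    pose proof (Gs_nonneg n C) as G0. pose proof (Ls_nonneg n lam) as L0. pose proof (LMs_nonneg n lam mu) as LM0.
    pose proof (Rabs_pos kappa) as ka0. pose proof (Rabs_pos (kappa + 1)) as k10.
    pose proof (Gs_nonneg n (Q3 Cinv lam)) as Q30.
    assert (l30 : 0 <= fsum n (fun i => Rabs (L3 n Cinv lam mu i))) by (apply fsum_nonneg; intros; apply Rabs_pos).
    pose proof (Rabs_pos (K3 n Cinv lam mu)) as K30.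
    destruct (coef_succ n lam mu C Cinv kappa k) as [EM [Ev Ec]]. fold h in EM, Ev, Ec.
    simpl pow. split; [|split].
    + intros i j. rewrite EM. destruct (tr_cases2 n i j) as [T0|[T1 [Hi Hj]]].
      { rewrite T0, Rmult_0_l, Rabs_R0. nra. }
      rewrite T1, Rmult_1_l, (Rmult_comm D (D ^ k)).
      apply (finish_bound _ _ _ _ (2 * Rabs (kappa + 1) * Gs n C + 2 * Rabs (kappa + 1) * Ls n lam + Rabs kappa * Gs n (Q3 Cinv lam))); auto.
      { unfold D, Dc. nra. }
      unfold RM.
      assert (B1 : Rabs (sum_f_R0 (fun l => Q1 n C (hatM (sM (h l))) (hatM (sM (h (k - l)%nat))) i j) k) <= INR (S k) * (4 * D ^ k * Gs n C)).
      { apply sum_bound. intros l Hl. eapply Rle_trans. apply bound_Q1. apply (Hhat l Hl). apply (Hhat (k - l)%nat ltac:(lia)).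
        rewrite <- (Hpk l Hl). apply Req_le; ring. }
      assert (B2 : Rabs (Q2 lam (hatM (sM (h k))) i j) <= Ls n lam * (2 * D ^ k)) by (apply bound_Q2; auto).
      assert (B3 : Rabs (dl k 0 * Q3 Cinv lam i j) <= Gs n (Q3 Cinv lam) * D ^ k).
      { rewrite Rabs_mult. pose proof (dl_abs k). pose proof (term_le_Gs n (Q3 Cinv lam) i j Hi Hj).
        pose proof (Rabs_pos (dl k 0)). pose proof (Rabs_pos (Q3 Cinv lam i j)). specialize (Hpow k). nra. }
      set (X1 := sum_f_R0 _ k) in *. set (X2 := Q2 _ _ i j) in *. set (X3 := dl k 0 * _) in *.
      eapply Rle_trans. apply Rabs_triang. eapply Rle_trans. apply Rplus_le_compat_r. apply Rabs_triang.
      rewrite !Rabs_mult.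
      replace (Rabs ((kappa + 1) / 2)) with (Rabs (kappa + 1) / 2) by (unfold Rdiv; rewrite Rabs_mult, Rabs_inv, (Rabs_pos_eq 2); lra).
      replace (Rabs (kappa / 2)) with (Rabs kappa / 2) by (unfold Rdiv; rewrite Rabs_mult, Rabs_inv, (Rabs_pos_eq 2); lra).
      assert (Rabs (kappa + 1) / 2 * Rabs X1 <= Rabs (kappa + 1) / 2 * (INR (S k) * (4 * D ^ k * Gs n C))) by (apply Rmult_le_compat_l; lra).
      assert (Rabs (kappa + 1) * Rabs X2 <= Rabs (kappa + 1) * (Ls n lam * (2 * D ^ k))) by (apply Rmult_le_compat_l; lra).
      assert (Rabs kappa / 2 * Rabs X3 <= Rabs kappa / 2 * (Gs n (Q3 Cinv lam) * D ^ k)) by (apply Rmult_le_compat_l; lra).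
      assert (Rabs (kappa + 1) * (Ls n lam * (2 * D ^ k)) <= INR (S k) * D ^ k * (2 * Rabs (kappa + 1) * Ls n lam)).
      { assert (0 <= D ^ k * (2 * Rabs (kappa + 1) * Ls n lam)) by (apply Rmult_le_pos; [lra|]; apply Rmult_le_pos; lra). nra. }
      assert (Rabs kappa / 2 * (Gs n (Q3 Cinv lam) * D ^ k) <= INR (S k) * D ^ k * (Rabs kappa * Gs n (Q3 Cinv lam))).
      { assert (0 <= D ^ k * (Rabs kappa * Gs n (Q3 Cinv lam))) by (apply Rmult_le_pos; [lra|]; apply Rmult_le_pos; lra). nra. }
      nra.
    + intros i. rewrite Ev. destruct (tr_cases1 n i) as [T0|[T1 Hi]].
      { rewrite T0, Rmult_0_l, Rabs_R0. nra. }
      rewrite T1, Rmult_1_l, (Rmult_comm D (D ^ k)).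
      apply (finish_bound _ _ _ _ (Rabs (kappa + 1) / 2 * (4 * Gs n C) + Rabs (kappa + 1) * (2 * LMs n lam mu + Ls n lam)
          + Rabs kappa / 2 * fsum n (fun i => Rabs (L3 n Cinv lam mu i)))); auto.
      { unfold D, Dc. nra. }
      unfold Rv. apply combine3; auto; try nra.
      * apply sum_bound. intros l Hl. eapply Rle_trans. apply bound_L1. apply (Hhat l Hl). apply (Hv l Hl).
        apply (Hhat (k - l)%nat ltac:(lia)). apply (Hv (k - l)%nat ltac:(lia)).
        rewrite <- (Hpk l Hl). apply Req_le; ring.
      * eapply Rle_trans. apply bound_L2; [auto | apply (Hhat k (le_n k)) | apply (Hv k (le_n k))]. apply Req_le; ring.
      * rewrite Rabs_mult. pose proof (dl_abs k). pose proof (term_le_sum n (L3 n Cinv lam mu) i Hi).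
        pose proof (Rabs_pos (dl k 0)). pose proof (Rabs_pos (L3 n Cinv lam mu i)). specialize (Hpow k). nra.
    + rewrite Ec, (Rmult_comm D (D ^ k)).
      apply (finish_bound _ _ _ _ (Rabs (kappa + 1) / 2 * Gs n C + Rabs (kappa + 1) * LMs n lam mu
          + Rabs kappa / 2 * Rabs (K3 n Cinv lam mu))); auto.
      { unfold D, Dc. nra. }
      unfold Rc. apply combine3; auto; try nra.
      * apply sum_bound. intros l Hl. eapply Rle_trans. apply bound_bilin. apply (Hv l Hl).
        apply (Hv (k - l)%nat ltac:(lia)).
        rewrite <- (Hpk l Hl). apply Req_le; ring.
      * eapply Rle_trans. apply bound_K2; apply (Hv k (le_n k)). apply Req_le; ring.
      * rewrite Rabs_mult. pose proof (dl_abs k).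
        pose proof (Rabs_pos (dl k 0)). pose proof (Rabs_pos (K3 n Cinv lam mu)). specialize (Hpow k). nra.
Qed.


Definition rad (a : nat -> R) s := Rbar_lt (Rabs s) (CV_radius a).

Lemma isp_conv2 n (a b : nat -> nat -> nat -> R) (G : mat) s (la lb : nat -> nat -> R) :
  (forall p q, (p < n)%nat -> (q < n)%nat ->
     is_pseries (a p q) s (la p q) /\ is_pseries (b p q) s (lb p q) /\ rad (a p q) s /\ rad (b p q) s) ->
  is_pseries (fun k => sum_f_R0 (fun l => fsum n (fun p => fsum n (fun q => a p q l * G p q * b p q (k - l)%nat))) k) s
    (fsum n (fun p => fsum n (fun q => la p q * G p q * lb p q))).
Proof.
  intros H.
  apply isp_ext with (a := fun k => fsum n (fun p => fsum n (fun q => sum_f_R0 (fun l => a p q l * G p q * b p q (k - l)%nat) k))) (l := fsum n (fun p => fsum n (fun q => la p q * G p q * lb p q))).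
  - intros k. rewrite <- fsum_sumf. apply fsum_ext; intros p _. rewrite <- fsum_sumf. reflexivity.
  - reflexivity.
  - apply (isp_fsum n (fun p k => fsum n (fun q => sum_f_R0 (fun l => a p q l * G p q * b p q (k - l)%nat) k))).
    intros p Hp.
    apply (isp_fsum n (fun q k => sum_f_R0 (fun l => a p q l * G p q * b p q (k - l)%nat) k)).
    intros q Hq. destruct (H p q Hp Hq) as [H1 [H2 [H3 H4]]].
    apply isp_mult3; auto.
Qed.

Definition aM n lam mu C Cinv kappa i j : nat -> R := fun k => sM (coef n lam mu C Cinv kappa k) i j.
Definition aH n lam mu C Cinv kappa i j : nat -> R := fun k => hatM (sM (coef n lam mu C Cinv kappa k)) i j.
Definition av n lam mu C Cinv kappa i : nat -> R := fun k => sv (coef n lam mu C Cinv kappa k) i.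
Definition ac n lam mu C Cinv kappa : nat -> R := fun k => sc (coef n lam mu C Cinv kappa k).

Definition Aser n lam mu C Cinv kappa (s : R) : mat := fun i j => PSeries (aM n lam mu C Cinv kappa i j) s.
Definition bser n lam mu C Cinv kappa (s : R) : vec := fun i => PSeries (av n lam mu C Cinv kappa i) s.
Definition cser n lam mu C Cinv kappa (s : R) : R := PSeries (ac n lam mu C Cinv kappa) s.

Lemma rad_all n lam mu C Cinv kappa s : Rabs s < / Dc n lam mu C Cinv kappa ->
  (forall i j, rad (aM n lam mu C Cinv kappa i j) s) /\ (forall i j, rad (aH n lam mu C Cinv kappa i j) s) /\
  (forall i, rad (av n lam mu C Cinv kappa i) s) /\ rad (ac n lam mu C Cinv kappa) s.
Proof.
  intros Hs. pose proof (Dc_ge1 n lam mu C Cinv kappa) as HD.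
  pose proof (coef_bound n lam mu C Cinv kappa) as B. cbv zeta in B.
  repeat split.
  - intros i j. apply (rad_bound _ 1 (Dc n lam mu C Cinv kappa)); auto; try lra. intros k. rewrite Rmult_1_l. apply B.
  - intros i j. apply (rad_bound _ 2 (Dc n lam mu C Cinv kappa)); auto; try lra. intros k.
    unfold aH, hatM. eapply Rle_trans; [apply Rabs_triang|]. destruct (B k) as [B1 _].
    pose proof (B1 i j); pose proof (B1 j i). lra.
  - intros i. apply (rad_bound _ 1 (Dc n lam mu C Cinv kappa)); auto; try lra. intros k. rewrite Rmult_1_l. apply B.
  - apply (rad_bound _ 1 (Dc n lam mu C Cinv kappa)); auto; try lra. intros k. rewrite Rmult_1_l. apply B.
Qed.

Lemma isp_all n lam mu C Cinv kappa s : Rabs s < / Dc n lam mu C Cinv kappa ->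
  (forall i j, is_pseries (aM n lam mu C Cinv kappa i j) s (Aser n lam mu C Cinv kappa s i j)) /\
  (forall i j, is_pseries (aH n lam mu C Cinv kappa i j) s (hatM (Aser n lam mu C Cinv kappa s) i j)) /\
  (forall i, is_pseries (av n lam mu C Cinv kappa i) s (bser n lam mu C Cinv kappa s i)) /\
  is_pseries (ac n lam mu C Cinv kappa) s (cser n lam mu C Cinv kappa s).
Proof.
  intros Hs. destruct (rad_all n lam mu C Cinv kappa s Hs) as [R1 [R2 [R3 R4]]].
  assert (HM : forall i j, is_pseries (aM n lam mu C Cinv kappa i j) s (Aser n lam mu C Cinv kappa s i j)).
  { intros. apply isp_val. apply R1. }
  repeat split; auto.
  - intros i j. unfold hatM. apply (isp_plus _ _ _ _ _ (HM i j) (HM j i)).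
  - intros i. apply isp_val. apply R3.
  - apply isp_val. apply R4.
Qed.

Definition RMv n lam (C Cinv : mat) kappa (A : mat) : mat := fun i j =>
  (kappa + 1) / 2 * Q1 n C (hatM A) (hatM A) i j + (kappa + 1) * Q2 lam (hatM A) i j + kappa / 2 * Q3 Cinv lam i j.
Definition Rvv n lam mu (C Cinv : mat) kappa (A : mat) (b : vec) : vec := fun i =>
  (kappa + 1) / 2 * L1 n C (hatM A) b (hatM A) b i + (kappa + 1) * L2 n lam mu (hatM A) b i + kappa / 2 * L3 n Cinv lam mu i.
Definition Rcv n lam mu (C Cinv : mat) kappa (b : vec) : R :=
  (kappa + 1) / 2 * bilin n C b b + (kappa + 1) * K2 n lam mu b + kappa / 2 * K3 n Cinv lam mu.

Lemma INR_S_neq k : INR (S k) <> 0.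
Proof. rewrite S_INR. pose proof (pos_INR k). lra. Qed.

Lemma dM_series n lam mu C Cinv kappa s i j : Rabs s < / Dc n lam mu C Cinv kappa ->
  is_pseries (PS_derive (aM n lam mu C Cinv kappa i j)) s
    (tr2 n i j * RMv n lam C Cinv kappa (Aser n lam mu C Cinv kappa s) i j).
Proof.
  intros Hs. destruct (rad_all n lam mu C Cinv kappa s Hs) as [R1 [R2 [R3 R4]]].
  destruct (isp_all n lam mu C Cinv kappa s Hs) as [I1 [I2 [I3 I4]]].
  set (h := coef n lam mu C Cinv kappa).
  apply isp_ext with (a := fun k => tr2 n i j * RM n lam C Cinv kappa k h i j) (l := tr2 n i j * RMv n lam C Cinv kappa (Aser n lam mu C Cinv kappa s) i j).
  { intros k. unfold PS_derive, aM. destruct (coef_succ n lam mu C Cinv kappa k) as [EM _]. fold h in EM |- *.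
    rewrite EM. field. apply INR_S_neq. }
  reflexivity.
  unfold h. apply isp_scal. unfold RM, RMv.
  apply isp_plus; [apply isp_plus|]; apply isp_scal.
  - apply (isp_conv2 n (fun p q => aH n lam mu C Cinv kappa p i) (fun p q => aH n lam mu C Cinv kappa q j) C s
       (fun p q => hatM (Aser n lam mu C Cinv kappa s) p i) (fun p q => hatM (Aser n lam mu C Cinv kappa s) q j)).
    intros; repeat split; auto.
  - unfold Q2. apply isp_ext with (a := fun k => - lam i * aH n lam mu C Cinv kappa i j k) (l := - lam i * hatM (Aser n lam mu C Cinv kappa s) i j);
    [intros; unfold aH; ring | ring | apply isp_scal; auto].
  - apply isp_delta.
Qed.

Lemma dv_series n lam mu C Cinv kappa s i : Rabs s < / Dc n lam mu C Cinv kappa ->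
  is_pseries (PS_derive (av n lam mu C Cinv kappa i)) s
    (tr1 n i * Rvv n lam mu C Cinv kappa (Aser n lam mu C Cinv kappa s) (bser n lam mu C Cinv kappa s) i).
Proof.
  intros Hs. destruct (rad_all n lam mu C Cinv kappa s Hs) as [R1 [R2 [R3 R4]]].
  destruct (isp_all n lam mu C Cinv kappa s Hs) as [I1 [I2 [I3 I4]]].
  set (h := coef n lam mu C Cinv kappa).
  set (A := Aser n lam mu C Cinv kappa s). set (b := bser n lam mu C Cinv kappa s).
  apply isp_ext with (a := fun k => tr1 n i * Rv n lam mu C Cinv kappa k h i) (l := tr1 n i * Rvv n lam mu C Cinv kappa A b i).
  { intros k. unfold PS_derive, av. destruct (coef_succ n lam mu C Cinv kappa k) as [_ [Ev _]]. fold h in Ev |- *.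
    rewrite Ev. field. apply INR_S_neq. }
  reflexivity.
  unfold h. apply isp_scal. unfold Rv, Rvv.
  apply isp_plus; [apply isp_plus|]; apply isp_scal.
  - unfold L1.
    apply isp_ext with
      (a := fun k => sum_f_R0 (fun l => fsum n (fun p => fsum n (fun q => aH n lam mu C Cinv kappa p i l * C p q * av n lam mu C Cinv kappa q (k - l)%nat))) k
                   + sum_f_R0 (fun l => fsum n (fun p => fsum n (fun q => av n lam mu C Cinv kappa p l * C p q * aH n lam mu C Cinv kappa q i (k - l)%nat))) k)
      (l := fsum n (fun p => fsum n (fun q => hatM A p i * C p q * b q)) + fsum n (fun p => fsum n (fun q => b p * C p q * hatM A q i))).
    + intros k. rewrite <- sumf_plus. apply sumf_ext; intros l _. rewrite <- fsum_plus. apply fsum_ext; intros p _.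
      rewrite <- fsum_plus. reflexivity.
    + rewrite <- fsum_plus. apply fsum_ext; intros p _. rewrite <- fsum_plus. reflexivity.
    + apply isp_plus.
      * apply (isp_conv2 n (fun p q => aH n lam mu C Cinv kappa p i) (fun p q => av n lam mu C Cinv kappa q) C s
           (fun p q => hatM A p i) (fun p q => b q)).
        intros; repeat split; auto.
      * apply (isp_conv2 n (fun p q => av n lam mu C Cinv kappa p) (fun p q => aH n lam mu C Cinv kappa q i) C s
           (fun p q => b p) (fun p q => hatM A q i)).
        intros; repeat split; auto.
  - unfold L2.
    apply isp_ext with (a := fun k => fsum n (fun p => lam p * mu p * aH n lam mu C Cinv kappa p i k) + - lam i * av n lam mu C Cinv kappa i k)
       (l := fsum n (fun p => lam p * mu p * hatM A p i) + - lam i * b i).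
    intros; unfold aH, av; ring. ring.
    apply isp_plus. apply (isp_fsum n (fun p k => lam p * mu p * aH n lam mu C Cinv kappa p i k)).
    intros; apply isp_scal; auto. apply isp_scal; auto.
  - apply isp_delta.
Qed.

Lemma dc_series n lam mu C Cinv kappa s : Rabs s < / Dc n lam mu C Cinv kappa ->
  is_pseries (PS_derive (ac n lam mu C Cinv kappa)) s
    (Rcv n lam mu C Cinv kappa (bser n lam mu C Cinv kappa s)).
Proof.
  intros Hs. destruct (rad_all n lam mu C Cinv kappa s Hs) as [R1 [R2 [R3 R4]]].
  destruct (isp_all n lam mu C Cinv kappa s Hs) as [I1 [I2 [I3 I4]]].
  set (h := coef n lam mu C Cinv kappa).
  set (b := bser n lam mu C Cinv kappa s).
  apply isp_ext with (a := fun k => Rc n lam mu C Cinv kappa k h) (l := Rcv n lam mu C Cinv kappa b).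
  { intros k. unfold PS_derive, ac. destruct (coef_succ n lam mu C Cinv kappa k) as [_ [_ Ec]]. fold h in Ec |- *.
    rewrite Ec. field. apply INR_S_neq. }
  reflexivity.
  unfold h. unfold Rc, Rcv.
  apply isp_plus; [apply isp_plus|]; apply isp_scal.
  - unfold bilin. apply (isp_conv2 n (fun p q => av n lam mu C Cinv kappa p) (fun p q => av n lam mu C Cinv kappa q) C s
           (fun p q => b p) (fun p q => b q)).
    intros; repeat split; auto.
  - unfold K2. apply (isp_fsum n (fun p k => lam p * mu p * av n lam mu C Cinv kappa p k)).
    intros; apply isp_scal; auto.
  - apply isp_delta.
Qed.


Lemma bilin_ext_vec n G u u' v v' : (forall i, (i < n)%nat -> u i = u' i) -> (forall i, (i < n)%nat -> v i = v' i) ->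
  bilin n G u v = bilin n G u' v'.
Proof. intros Hu Hv. unfold bilin. apply fsum_ext; intros i Hi. apply fsum_ext; intros j Hj. rewrite Hu, Hv; auto. Qed.
Lemma dot_ext_vec n u u' v v' : (forall i, (i < n)%nat -> u i = u' i) -> (forall i, (i < n)%nat -> v i = v' i) ->
  dot n u v = dot n u' v'.
Proof. intros Hu Hv. unfold dot. apply fsum_ext; intros i Hi. rewrite Hu, Hv; auto. Qed.

Lemma quad_lin3 n a b c M1 M2 M3 v1 v2 v3 c1 c2 c3 x :
  quad n (fun i j => a * M1 i j + b * M2 i j + c * M3 i j) (fun i => a * v1 i + b * v2 i + c * v3 i) (a * c1 + b * c2 + c * c3) x
  = a * quad n M1 v1 c1 x + b * quad n M2 v2 c2 x + c * quad n M3 v3 c3 x.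
Proof.
  unfold quad, bilin, dot.
  assert (H1 : fsum n (fun i => fsum n (fun j => x i * (a * M1 i j + b * M2 i j + c * M3 i j) * x j)) =
    a * fsum n (fun i => fsum n (fun j => x i * M1 i j * x j)) + b * fsum n (fun i => fsum n (fun j => x i * M2 i j * x j))
    + c * fsum n (fun i => fsum n (fun j => x i * M3 i j * x j))).
  { rewrite <- !fsum_scal_l, <- !fsum_plus. apply fsum_ext; intros i _.
    rewrite <- !fsum_scal_l, <- !fsum_plus. apply fsum_ext; intros; ring. }
  assert (H2 : fsum n (fun i => (a * v1 i + b * v2 i + c * v3 i) * x i) =
    a * fsum n (fun i => v1 i * x i) + b * fsum n (fun i => v2 i * x i) + c * fsum n (fun i => v3 i * x i)).
  { rewrite <- !fsum_scal_l, <- !fsum_plus. apply fsum_ext; intros; ring. }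
  rewrite H1, H2. ring.
Qed.

Lemma quad_neg_tr n M v c x :
  quad n (fun i j => - (tr2 n i j * M i j)) (fun i => - (tr1 n i * v i)) (- c) x = - quad n M v c x.
Proof.
  unfold quad, bilin, dot.
  assert (H1 : fsum n (fun i => fsum n (fun j => x i * - (tr2 n i j * M i j) * x j)) = fsum n (fun i => - fsum n (fun j => x i * M i j * x j))).
  { apply fsum_ext. intros i Hi. rewrite <- fsum_opp. apply fsum_ext; intros j Hj. unfold tr2.
    destruct (Nat.ltb_spec i n), (Nat.ltb_spec j n); simpl; try lia. ring. }
  assert (H2 : fsum n (fun i => - (tr1 n i * v i) * x i) = fsum n (fun i => - (v i * x i))).
  { apply fsum_ext. intros i Hi. unfold tr1. destruct (Nat.ltb_spec i n); [ring|lia]. }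
  rewrite H1, H2, !fsum_opp. ring.
Qed.

Lemma HJ0_alg n lam mu C Cinv kappa (A : mat) (b : vec) x :
  - quad n (RMv n lam C Cinv kappa A) (Rvv n lam mu C Cinv kappa A b) (Rcv n lam mu C Cinv kappa b) x
  + (kappa + 1) / 2 * bilin n C (aff n (hatM A) b x) (aff n (hatM A) b x)
  + (kappa + 1) * dot n (drift lam mu x) (aff n (hatM A) b x)
  + kappa / 2 * bilin n Cinv (drift lam mu x) (drift lam mu x) = 0.
Proof.
  rewrite expand1, expand2, expand3. unfold RMv, Rvv, Rcv.
  rewrite quad_lin3. ring.
Qed.


Definition clamp (rho u : R) : R := Rmax (- rho) (Rmin rho u).

Lemma clamp_abs rho u : 0 <= rho -> Rabs (clamp rho u) <= rho.
Proof. intros H. unfold clamp, Rmax, Rmin. destruct (Rle_dec rho u), (Rle_dec (-rho) _); apply Rabs_le; lra. Qed.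

Lemma clamp_id rho u : Rabs u < rho -> clamp rho u = u.
Proof. intros H. apply Rabs_def2 in H. unfold clamp. rewrite Rmin_right by lra. rewrite Rmax_right by lra. reflexivity. Qed.

Lemma Rmin_lip r u v : Rabs (Rmin r u - Rmin r v) <= Rabs (u - v).
Proof. unfold Rmin. destruct (Rle_dec r u), (Rle_dec r v); unfold Rabs; repeat destruct Rcase_abs; lra. Qed.
Lemma Rmax_lip r u v : Rabs (Rmax r u - Rmax r v) <= Rabs (u - v).
Proof. unfold Rmax. destruct (Rle_dec r u), (Rle_dec r v); unfold Rabs; repeat destruct Rcase_abs; lra. Qed.
Lemma clamp_lip rho u v : 0 <= rho -> Rabs (clamp rho u - clamp rho v) <= Rabs (u - v).
Proof. intros H. unfold clamp. eapply Rle_trans. apply Rmax_lip. apply Rmin_lip. Qed.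

Lemma clampT_cont rho T t : 0 <= rho -> continuity_pt (fun t => clamp rho (T - t)) t.
Proof.
  intros H eps Heps. exists eps. split; auto. intros y [_ Hy]. simpl in *. unfold R_dist in *.
  eapply Rle_lt_trans. apply clamp_lip; auto. replace (T - y - (T - t)) with (- (y - t)) by ring.
  rewrite Rabs_Ropp. auto.
Qed.

Lemma PSeries_cont (a : nat -> R) u : Rbar_lt (Rabs u) (CV_radius a) -> continuity_pt (PSeries a) u.
Proof.
  intros H. apply continuity_pt_filterlim. exact (ex_derive_continuous (K:=R_AbsRing) (V:=R_NormedModule) (PSeries a) u (ex_intro _ _ (is_derive_PSeries a u H))).
Qed.

Lemma fsum_cont n (f : nat -> R -> R) t : (forall k, (k < n)%nat -> continuity_pt (f k) t) ->
  continuity_pt (fun s => fsum n (fun k => f k s)) t.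
Proof.
  induction n; intros H; simpl.
  - apply continuity_pt_const. intros a b; auto.
  - apply (continuity_pt_plus (fun s => fsum n (fun k => f k s)) (f n)). apply IHn; intros; apply H; lia. apply H; lia.
Qed.

Lemma PSeries_derive_comp (a : nat -> R) rho T t :
  Rabs (T - t) < rho -> Rbar_lt (Rabs (T - t)) (CV_radius a) ->
  is_derive (fun t => PSeries a (clamp rho (T - t))) t (- PSeries (PS_derive a) (T - t)).
Proof.
  intros H1 H2.
  apply is_derive_ext_loc with (f := fun t => PSeries a (T - t)).
  - assert (Hpos : 0 < rho - Rabs (T - t)) by lra.
    exists (mkposreal _ Hpos). intros y Hy. simpl in Hy. unfold ball in Hy. simpl in Hy. unfold AbsRing_ball in Hy.
    simpl in Hy. rewrite clamp_id; auto.
    unfold abs, minus, plus, opp in Hy. simpl in Hy.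
    replace (T - y) with ((T - t) - (y + - t)) by ring.
    eapply Rle_lt_trans. apply Rabs_triang. rewrite Rabs_Ropp. lra.
  - assert (Hg : is_derive (fun t => T - t) t (-1)).
    { pose proof (dR_plus (fun _ => T) (fun t => (-1) * t) t 0 ((-1) * 1) (dR_const T t)
        (is_derive_scal (fun t => t) t (-1) 1 (dR_id t))) as Hg.
      apply (dR_ext (fun t => T + (-1) * t) (fun t => T - t) t (0 + (-1) * 1) (-1)); [intros; ring | lra | exact Hg]. }
    pose proof (is_derive_comp (PSeries a) (fun t => T - t) t _ (-1) (is_derive_PSeries a (T - t) H2) Hg) as H.
    eapply dR_ext; [intros; reflexivity| |apply H].
    change (scal (-1) (PSeries (PS_derive a) (T - t))) with ((-1) * PSeries (PS_derive a) (T - t)). change (@eq R ((-1) * PSeries (PS_derive a) (T - t)) (- PSeries (PS_derive a) (T - t))). ring.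
Qed.



Lemma fsum_zero_ext n f : (forall i, (i < n)%nat -> f i = 0) -> fsum n f = 0.
Proof. intros H. rewrite (fsum_ext n f (fun _ => 0)) by auto. apply fsum_zero. Qed.

Lemma quad_addc n M v c e x : quad n M v (c + e) x = quad n M v c x + e.
Proof. unfold quad; ring. Qed.

Lemma cont_entry (a : nat -> R) rho T s : 0 <= rho -> (forall u, Rabs u <= rho -> Rbar_lt (Rabs u) (CV_radius a)) ->
  continuity_pt (fun s => PSeries a (clamp rho (T - s))) s.
Proof.
  intros Hr H.
  apply (continuity_pt_comp (fun s => clamp rho (T - s)) (PSeries a)).
  apply clampT_cont; auto. apply PSeries_cont. apply H. apply clamp_abs; auto.
Qed.

Theorem mainTheorem5 (n : nat) (lam mu : vec) (C Cinv : mat) (kappa : R) :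
  posdef n C -> is_inverse n C Cinv -> kappa <> -1 ->
  exists T0 : R, 0 < T0 /\
  forall T : R, 0 < T <= T0 ->
  exists S0 : R -> vec -> R,
    quadratic_in_x n S0 /\
    HJ0 n C Cinv lam mu kappa T S0 /\
    (forall s x y, trmul n C (hess S0 s x) = trmul n C (hess S0 s y)) /\
    (forall t : R, exists pr : Riemann_integrable
        (fun s => trmul n C (hess S0 s zero_vec)) t T, True) /\
    (forall S1 : R -> R,
      (forall t (pr : Riemann_integrable
                  (fun s => trmul n C (hess S0 s zero_vec)) t T),
         S1 t = / 2 * RiemannInt pr) ->
      HJfull n C Cinv lam mu kappa T (fun t x => S0 t x + S1 t)).
Proof.
  intros _ _ _.
  set (D := Dc n lam mu C Cinv kappa).
  assert (HD : 1 <= D) by apply Dc_ge1.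
  assert (Hr : 0 < / D) by (apply Rinv_0_lt_compat; lra).
  exists (/ D / 4). split; [lra|].
  intros T [HT0 HT].
  set (rho := / D / 2).
  set (Amat := fun t => Aser n lam mu C Cinv kappa (clamp rho (T - t))).
  set (bvec := fun t => bser n lam mu C Cinv kappa (clamp rho (T - t))).
  set (cfun := fun t => cser n lam mu C Cinv kappa (clamp rho (T - t))).
  set (S0 := Sq n Amat bvec cfun).
  exists S0.
  assert (Hcl : forall u, Rabs u <= rho -> Rabs u < / D) by (intros; unfold rho in *; lra).
  assert (Hin : forall t, 0 <= t <= T -> Rabs (T - t) < rho).
  { intros t Ht. rewrite Rabs_pos_eq by lra. unfold rho. lra. }
  assert (HradA : forall u, Rabs u <= rho -> forall i j, Rbar_lt (Rabs u) (CV_radius (aM n lam mu C Cinv kappa i j))).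
  { intros u Hu i j. apply (proj1 (rad_all n lam mu C Cinv kappa u (Hcl u Hu))). }
  assert (Hradb : forall u, Rabs u <= rho -> forall i, Rbar_lt (Rabs u) (CV_radius (av n lam mu C Cinv kappa i))).
  { intros u Hu i. apply (proj1 (proj2 (proj2 (rad_all n lam mu C Cinv kappa u (Hcl u Hu))))). }
  assert (Hradc : forall u, Rabs u <= rho -> Rbar_lt (Rabs u) (CV_radius (ac n lam mu C Cinv kappa))).
  { intros u Hu. apply (proj2 (proj2 (proj2 (rad_all n lam mu C Cinv kappa u (Hcl u Hu))))). }
  assert (Hrho : 0 <= rho) by (unfold rho; lra).
  assert (HdA : forall t, 0 <= t <= T -> forall i j, is_derive (fun s => Amat s i j) t
      (- (tr2 n i j * RMv n lam C Cinv kappa (Amat t) i j))).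
  { intros t Ht i j. unfold Amat, Aser.
    assert (Hs : Rabs (T - t) <= rho) by (pose proof (Hin t Ht); lra).
    eapply dR_ext; [intros; reflexivity| |apply PSeries_derive_comp; auto].
    f_equal. rewrite clamp_id by auto. apply is_pseries_unique. apply dM_series. auto. }
  assert (Hdb : forall t, 0 <= t <= T -> forall i, is_derive (fun s => bvec s i) t
      (- (tr1 n i * Rvv n lam mu C Cinv kappa (Amat t) (bvec t) i))).
  { intros t Ht i. unfold bvec, bser.
    assert (Hs : Rabs (T - t) <= rho) by (pose proof (Hin t Ht); lra).
    eapply dR_ext; [intros; reflexivity| |apply PSeries_derive_comp; auto].
    f_equal. unfold Amat, bvec. rewrite clamp_id by auto. apply is_pseries_unique. apply dv_series. auto. }
  assert (Hdc : forall t, 0 <= t <= T -> is_derive cfun t (- Rcv n lam mu C Cinv kappa (bvec t))).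
  { intros t Ht. unfold cfun, cser.
    assert (Hs : Rabs (T - t) <= rho) by (pose proof (Hin t Ht); lra).
    eapply dR_ext; [intros; reflexivity| |apply PSeries_derive_comp; auto].
    f_equal. unfold bvec. rewrite clamp_id by auto. apply is_pseries_unique. apply dc_series. auto. }
  assert (Hdt : forall t x, 0 <= t <= T -> forall (c' : R -> R) dc', is_derive c' t dc' ->
     is_derive (fun s => Sq n Amat bvec c' s x) t
       (quad n (fun i j => - (tr2 n i j * RMv n lam C Cinv kappa (Amat t) i j))
               (fun i => - (tr1 n i * Rvv n lam mu C Cinv kappa (Amat t) (bvec t) i)) dc' x)).
  { intros t x Ht c' dc' Hc'. apply dtime_Sq; auto. }
  set (g := fun s => fsum n (fun i => fsum n (fun j => C i j * hatM (Amat s) j i))).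
  assert (Hg : forall s x, trmul n C (hess S0 s x) = g s).
  { intros s x. unfold trmul, g. apply fsum_ext; intros i Hi. apply fsum_ext; intros j Hj.
    unfold S0. rewrite (proj1 (hess_Sq n Amat bvec cfun s x j i Hj Hi)). reflexivity. }
  assert (Hgc : forall s, continuity_pt g s).
  { intros s. unfold g. apply fsum_cont; intros i Hi. apply fsum_cont; intros j Hj.
    apply (continuity_pt_mult (fun _ => C i j) (fun s => hatM (Amat s) j i)).
    apply continuity_pt_const; intros a b; auto.
    unfold hatM, Amat, Aser.
    apply (continuity_pt_plus (fun s => PSeries (aM n lam mu C Cinv kappa j i) (clamp rho (T - s)))
                              (fun s => PSeries (aM n lam mu C Cinv kappa i j) (clamp rho (T - s))));
    apply cont_entry; auto. }
  assert (Hfg : (fun s => trmul n C (hess S0 s zero_vec)) = g).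
  { apply functional_extensionality. intros s. apply Hg. }
  assert (HRI : forall t, Riemann_integrable (fun s => trmul n C (hess S0 s zero_vec)) t T).
  { intros t. rewrite Hfg. destruct (Rle_dec t T).
    - apply continuity_implies_RiemannInt; auto.
    - apply RiemannInt_P1. apply continuity_implies_RiemannInt; [lra|auto]. }
  assert (HS0T : forall x, S0 T x = 0).
  { intros x. unfold S0, Sq, Amat, bvec, cfun. rewrite Rminus_eq_0.
    rewrite clamp_id by (rewrite Rabs_R0; unfold rho; lra).
    assert (H1 : bilin n (Aser n lam mu C Cinv kappa 0) x x = 0).
    { unfold bilin. apply fsum_zero_ext; intros i _. apply fsum_zero_ext; intros j _.
      unfold Aser, aM. rewrite PSeries_0, coef0. simpl. ring. }
    assert (H2 : dot n (bser n lam mu C Cinv kappa 0) x = 0).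
    { unfold dot. apply fsum_zero_ext; intros i _.
      unfold bser, av. rewrite PSeries_0, coef0. simpl. ring. }
    assert (H3 : cser n lam mu C Cinv kappa 0 = 0).
    { unfold cser, ac. rewrite PSeries_0, coef0. reflexivity. }
    rewrite H1, H2, H3. ring. }
  assert (Hgrad : forall c' t x i, (i < n)%nat -> grad (Sq n Amat bvec c') t x i = aff n (hatM (Amat t)) (bvec t) x i).
  { intros c' t x i Hi. apply (proj1 (grad_Sq n Amat bvec c' t x i Hi)). }
  assert (Htr : forall c' t x, trmul n C (hess (Sq n Amat bvec c') t x) = g t).
  { intros c' t x. unfold trmul, g. apply fsum_ext; intros i Hi. apply fsum_ext; intros j Hj.
    rewrite (proj1 (hess_Sq n Amat bvec c' t x j i Hj Hi)). reflexivity. }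
  assert (Hreg : forall c', (forall t, 0 <= t <= T -> has_deriv c' t) -> regular n T (Sq n Amat bvec c')).
  { intros c' Hc' t x Ht. split.
    - destruct (Hc' t Ht) as [l Hl]. apply is_derive_Reals in Hl.
      apply (proj2 (deriv_of _ _ _ (Hdt t x Ht c' l Hl))).
    - intros i j Hi Hj. split.
      + apply (proj2 (grad_Sq n Amat bvec c' t x i Hi)).
      + apply (proj2 (hess_Sq n Amat bvec c' t x i j Hi Hj)). }
  assert (Hcore : forall t x, 0 <= t <= T ->
    quad n (fun i j => - (tr2 n i j * RMv n lam C Cinv kappa (Amat t) i j))
           (fun i => - (tr1 n i * Rvv n lam mu C Cinv kappa (Amat t) (bvec t) i)) (- Rcv n lam mu C Cinv kappa (bvec t)) x
    + (kappa + 1) / 2 * bilin n C (aff n (hatM (Amat t)) (bvec t) x) (aff n (hatM (Amat t)) (bvec t) x)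
    + (kappa + 1) * dot n (drift lam mu x) (aff n (hatM (Amat t)) (bvec t) x)
    + kappa / 2 * bilin n Cinv (drift lam mu x) (drift lam mu x) = 0).
  { intros t x Ht. rewrite quad_neg_tr. apply HJ0_alg. }
  assert (Hgcont : forall z, continuous g z).
  { intros z. apply continuity_pt_filterlim. apply Hgc. }
  assert (HderI : forall t, is_derive (fun a => RInt g a T) t (- g t)).
  { intros t. apply (is_derive_RInt' (V:=R_CompleteNormedModule) g (fun a => RInt g a T) t T).
    - apply filter_forall. intros a. apply RInt_correct. apply ex_RInt_continuous. intros; apply Hgcont.
    - apply Hgcont. }
  split; [|split; [|split; [|split]]].
  - exists Amat, bvec, cfun. intros; reflexivity.
  - split; [|split].
    + apply Hreg. intros t Ht. exists (- Rcv n lam mu C Cinv kappa (bvec t)). apply is_derive_Reals. apply Hdc; auto.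
    + exact HS0T.
    + intros t x Ht.
      unfold dtime, S0.
      assert (Hd : deriv (fun s : R => Sq n Amat bvec cfun s x) t =
        quad n (fun i j => - (tr2 n i j * RMv n lam C Cinv kappa (Amat t) i j))
           (fun i => - (tr1 n i * Rvv n lam mu C Cinv kappa (Amat t) (bvec t) i)) (- Rcv n lam mu C Cinv kappa (bvec t)) x)
        by apply (proj1 (deriv_of _ _ _ (Hdt t x Ht cfun _ (Hdc t Ht)))).
      rewrite Hd.
      rewrite (bilin_ext_vec n C (grad (Sq n Amat bvec cfun) t x) (aff n (hatM (Amat t)) (bvec t) x) (grad (Sq n Amat bvec cfun) t x) (aff n (hatM (Amat t)) (bvec t) x))
        by (intros; apply Hgrad; auto).
      rewrite (dot_ext_vec n (drift lam mu x) (drift lam mu x) (grad (Sq n Amat bvec cfun) t x) (aff n (hatM (Amat t)) (bvec t) x))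
        by (intros; auto; apply Hgrad; auto).
      apply Hcore; auto.
  - intros s x y. rewrite !Hg. reflexivity.
  - intros t. exists (HRI t). exact I.
  - intros S1 HS1.
    assert (HS1e : S1 = fun t => / 2 * RInt g t T).
    { apply functional_extensionality. intros t. rewrite (HS1 t (HRI t)). rewrite <- RInt_Reals. rewrite Hfg. reflexivity. }
    assert (HSe : (fun t x => S0 t x + S1 t) = Sq n Amat bvec (fun t => cfun t + S1 t)).
    { apply functional_extensionality; intros t. apply functional_extensionality; intros x.
      unfold S0, Sq. ring. }
    subst S1.
    assert (HdS1 : forall t, 0 <= t <= T -> is_derive (fun t => cfun t + / 2 * RInt g t T) t ((- Rcv n lam mu C Cinv kappa (bvec t)) + / 2 * - g t)).
    { intros t Ht. apply (dR_plus cfun (fun t => / 2 * RInt g t T)). apply Hdc; auto.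
      apply (is_derive_scal (fun a => RInt g a T) t (/ 2) (- g t) (HderI t)). }
    rewrite HSe. split; [|split].
    + apply Hreg. intros t Ht. eexists. apply is_derive_Reals. apply HdS1; auto.
    + intros x. assert (H0 : RInt g T T = 0) by exact (RInt_point (V:=R_CompleteNormedModule) T g).
      pose proof (HS0T x) as H. unfold S0, Sq in *. rewrite H0. lra.
    + intros t x Ht. unfold dtime.
      assert (Hd : deriv (fun s : R => Sq n Amat bvec (fun t => cfun t + / 2 * RInt g t T) s x) t =
        quad n (fun i j => - (tr2 n i j * RMv n lam C Cinv kappa (Amat t) i j))
           (fun i => - (tr1 n i * Rvv n lam mu C Cinv kappa (Amat t) (bvec t) i)) (- Rcv n lam mu C Cinv kappa (bvec t) + / 2 * - g t) x)
        by apply (proj1 (deriv_of _ _ _ (Hdt t x Ht _ _ (HdS1 t Ht)))).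
      rewrite Hd, quad_addc, Htr.
      set (c' := fun t => cfun t + / 2 * RInt g t T).
      rewrite (bilin_ext_vec n C (grad (Sq n Amat bvec c') t x) (aff n (hatM (Amat t)) (bvec t) x) (grad (Sq n Amat bvec c') t x) (aff n (hatM (Amat t)) (bvec t) x))
        by (intros; apply Hgrad; auto).
      rewrite (dot_ext_vec n (drift lam mu x) (drift lam mu x) (grad (Sq n Amat bvec c') t x) (aff n (hatM (Amat t)) (bvec t) x))
        by (intros; auto; apply Hgrad; auto).
      pose proof (Hcore t x Ht). lra.
Qed.
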